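(* Let $C$ be a Reedy category and let $([n],X)$ be an object of $\int N^{-,+}(C)$. The following are equivalent: (1) $([n],X)$ is an object of $\int N^{--,+}_+(C)$, i.e. $X$ reflects identities; (2) $\mathrm{id}_{([n],X)}$ is maximal in $\mathrm{Hom}_{\int N^{-,+}(C)}(([n],X),([n],X))$; (3) $\mathrm{id}_{([n],X)}$ is minimal in this hom-poset; (4) $\mathrm{id}_{([n],X)}$ is the largest element of its equivalence class; (5) the equivalence class of $\mathrm{id}_{([n],X)}$ is a singleton.
   Context: A Reedy category $(C,C_-,C_+)$: wide subcategories with unique factorization of every morphism as ($C_-$ then $C_+$), membership in $C_\pm$ decidable, and the relation ($x<'y$ iff non-identity $x\to y$ in $C_+$ or non-identity $y\to x$ in $C_-$) well-founded. $\Delta$: finite ordinals $[n]$ and order-preserving maps. $\int N^{-,+}(C)$: objects $([n],X)$ with $X\colon[n]\to C$ a functor sending all morphisms into $C_-$; morphisms $([m],X)\to([n],Y)$ are $(\alpha,\theta)$ with $\alpha\colon[m]\to[n]$ in $\Delta$ and $\theta\colon X\Rightarrow Y\circ\alpha$ with all components in $C_+$; composition $(\beta,\varphi)\circ(\alpha,\theta)=(\beta\alpha,(\varphi\alpha)\circ\theta)$. $\int N^{--,+}_+(C)$: subcategory on objects whose $X$ reflects identities ($X(i\le j)$ an identity implies $i=j$) and morphisms with $\alpha$ injective. Order on hom-sets: $(\alpha,\theta)\le(\alpha',\theta')$ iff $\alpha\le\alpha'$ pointwise and $\theta'_i=Y(\alpha(i)\le\alpha'(i))\circ\theta_i$ for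 all $i$; equivalence is the equivalence relation generated by $\le$. *)

(* Defs.v *)
From mathcomp Require Import all_boot.
From Stdlib Require Import Relations.
Set Implicit Arguments. Unset Strict Implicit. Unset Printing Implicit Defensive.

Record Category := {
  Ob :> Type;
  Hom : Ob -> Ob -> Type;
  cid : forall a, Hom a a;
  ccomp : forall x y z, Hom y z -> Hom x y -> Hom x z;  (* ccomp g f = g o f *)
  ccompA : forall a b c d (h : Hom c d) (g : Hom b c) (f : Hom a b),
      ccomp h (ccomp g f) = ccomp (ccomp h g) f;
  ccomp1f : forall a b (f : Hom a b), ccomp (cid b) f = f;
  ccompf1 : forall a b (f : Hom a b), ccomp f (cid a) = f
}.
Arguments Hom {_} _ _. Arguments cid {_} _. Arguments ccomp {_ x y z}.

Definition is_id (C : Category) (a b : C) (f : Hom a b) : Prop :=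
  exists e : a = b, f = eq_rect a (fun b' => Hom a b') (cid a) b e.

Record Reedy := {
  rcat :> Category;
  Cminus : forall a b : rcat, Hom a b -> bool;
  Cplus  : forall a b : rcat, Hom a b -> bool;
  Cminus_id : forall a, Cminus (cid a);
  Cplus_id  : forall a, Cplus (cid a);
  Cminus_comp : forall a b c (g : Hom b c) (f : Hom a b),
      Cminus g -> Cminus f -> Cminus (ccomp g f);
  Cplus_comp : forall a b c (g : Hom b c) (f : Hom a b),
      Cplus g -> Cplus f -> Cplus (ccomp g f);
  reedy_fact : forall a b (f : Hom a b),
      exists c (g : Hom a c) (h : Hom c b), [/\ Cminus g, Cplus h & f = ccomp h g];
  reedy_fact_uniq : forall a b (f : Hom a b) c (g : Hom a c) (h : Hom c b)
      c' (g' : Hom a c') (h' : Hom c' b),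
      Cminus g -> Cplus h -> f = ccomp h g ->
      Cminus g' -> Cplus h' -> f = ccomp h' g' ->
      existT (fun c0 => (Hom a c0 * Hom c0 b)%type) c (g, h)
      = existT (fun c0 => (Hom a c0 * Hom c0 b)%type) c' (g', h');
  reedy_wf : well_founded (fun x y : rcat =>
      (exists f : Hom x y, Cplus f /\ ~ is_id f) \/
      (exists g : Hom y x, Cminus g /\ ~ is_id g))
}.
Arguments Cminus {_ a b}. Arguments Cplus {_ a b}.

(** [n] is the poset 'I_n.+1; a functor X : [n] -> C is an object map with
    maps X(i<=j), functorial, all in C_-. *)
Record NObj (C : Reedy) := {
  ndim : nat;
  Xob : 'I_ndim.+1 -> C;
  Xmor : forall i j : 'I_ndim.+1, (i <= j)%N -> Hom (Xob i) (Xob j);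
  Xmor_id : forall (i : 'I_ndim.+1) (h : (i <= i)%N), Xmor h = cid (Xob i);
  Xmor_comp : forall (i j k : 'I_ndim.+1) (hij : (i <= j)%N) (hjk : (j <= k)%N) (hik : (i <= k)%N),
      ccomp (Xmor hjk) (Xmor hij) = Xmor hik;
  Xmor_minus : forall (i j : 'I_ndim.+1) (h : (i <= j)%N), Cminus (Xmor h)
}.
Arguments ndim {C} _. Arguments Xob {C} _ _. Arguments Xmor {C} _ {i j} _.

Record NHom (C : Reedy) (X Y : NObj C) := {
  alpha : 'I_(ndim X).+1 -> 'I_(ndim Y).+1;
  alpha_mono : forall i j : 'I_(ndim X).+1, (i <= j)%N -> (alpha i <= alpha j)%N;
  theta : forall i, Hom (Xob X i) (Xob Y (alpha i));
  theta_plus : forall i, Cplus (theta i);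
  theta_nat : forall (i j : 'I_(ndim X).+1) (h : (i <= j)%N),
      ccomp (Xmor Y (alpha_mono h)) (theta i) = ccomp (theta j) (Xmor X h)
}.

Definition NHom_id (C : Reedy) (X : NObj C) : NHom X X.
Proof.
refine {| alpha := fun i => i; alpha_mono := fun i j h => h;
          theta := fun i => cid (Xob X i) |}.
- by move=> i; apply: Cplus_id.
- by move=> i j h; rewrite ccomp1f ccompf1.
Defined.

Definition NHom_le (C : Reedy) (X Y : NObj C) (f g : NHom X Y) : Prop :=
  exists H : forall i, (alpha f i <= alpha g i)%N,
    forall i, theta g i = ccomp (Xmor Y (H i)) (theta f i).

Definition NHom_equiv (C : Reedy) (X Y : NObj C) : relation (NHom X Y) :=
  clos_refl_sym_trans _ (@NHom_le C X Y).

Definition reflects_ids (C : Reedy) (X : NObj C) : Prop :=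
  forall (i j : 'I_(ndim X).+1) (h : (i <= j)%N), is_id (Xmor X h) -> i = j.

(* Main.v *)
Require Import Defs.
From mathcomp Require Import all_boot zify.
From Stdlib Require Import Relations ProofIrrelevance FunctionalExtensionality Classical.
Set Implicit Arguments. Unset Strict Implicit. Unset Printing Implicit Defensive.

Definition tr (C : Category) (a b : C) (e : a = b) : Hom a b :=
  eq_rect a (fun b' => Hom a b') (cid a) b e.

Lemma isid_tr (C : Category) (a b : C) (f : Hom a b) : is_id f -> forall e, f = tr e.
Proof. by case=> e' -> e; rewrite (proof_irrelevance _ e' e). Qed.

Lemma tr_isid (C : Category) (a b : C) (e : a = b) : is_id (tr e).
Proof. by exists e. Qed.

Lemma tr_comp_inv (C : Category) (a b : C) (e : a = b) :
  ccomp (tr (esym e)) (tr e) = cid a.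
Proof. by case: b / e; rewrite /= ccomp1f. Qed.

Lemma Cplus_isid (C : Reedy) (a b : C) (f : Hom a b) : is_id f -> Cplus f.
Proof. case=> e ->; clear f; case: b / e => /=. exact: Cplus_id. Qed.

Lemma pm_isid (C : Reedy) (a b : C) (g : Hom a b) : Cplus g -> Cminus g -> is_id g.
Proof.
move=> hp hm.
have E := @reedy_fact_uniq C a b g a (cid a) g b g (cid b)
  (Cminus_id _) hp (esym (ccompf1 g)) hm (Cplus_id _) (esym (ccomp1f g)).
pose F := fun s : {c0 : C & (Hom a c0 * Hom c0 b)%type} =>
   existT (fun c0 => Hom a c0) (projT1 s) (projT2 s).1.
have E2 := f_equal F E. rewrite /F /= in E2.
exists (projT1_eq E2).
exact: esym (projT2_eq E2).
Qed.

Lemma wf_no2 (T : Type) (R : T -> T -> Prop) : well_founded R ->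
  forall x y, R x y -> R y x -> False.
Proof.
move=> wf x; elim: (wf x) => {}x _ IH y Rxy Ryx.
exact: (IH y Ryx x Ryx Rxy).
Qed.

Lemma mm_isid (C : Reedy) (a b c : C) (g : Hom a b) (h : Hom b c) :
  Cminus g -> Cminus h -> is_id (ccomp h g) -> is_id g.
Proof.
move=> mg mh [e]; case: c / e h mh => h mh /= hg.
case: (classic (is_id g)) => // ng.
case: (classic (is_id h)) => [[e' eh]|nh].
  case: a / e' g mg h mh hg ng eh => g mg h mh hg ng eh.
  by exfalso; apply: ng; exists erefl; rewrite -hg eh /= ccomp1f.
exfalso; refine (wf_no2 (@reedy_wf C) (x := b) (y := a) _ _).
- by right; exists g.
- by right; exists h.
Qed.

Lemma split_isid (C : Category) (a b : C) (t : Hom a b) (u : Hom b a) :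
  existT (fun c => Hom c b) b (cid b) = existT _ a t -> ccomp u t = cid a ->
  is_id u /\ is_id t.
Proof.
move=> E.
have := projT2_eq E; move: (projT1_eq E) => /= e.
case: a / e t u E => t u _ /= <-; rewrite ccompf1 => ->.
by split; exists erefl.
Qed.

Lemma isid_comp_l (C : Category) (a b : C) (t : Hom a b) (u : Hom b a) :
  is_id u -> ccomp u t = cid a -> is_id t.
Proof.
case=> e ->; clear u; case: a / e t => t /=; rewrite ccomp1f => ->; by exists erefl.
Qed.

Lemma tr_comp_inv2 (C : Category) (a b : C) (e : a = b) :
  ccomp (tr e) (tr (esym e)) = cid b.
Proof. by case: b / e; rewrite /= ccomp1f. Qed.

Section NX.
Variable C : Reedy.
Variable X : NObj C.
Local Notation I := ('I_(ndim X).+1).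
Local Notation XM := (Xmor X).

Lemma Xmor_irr (i j : I) (h h' : (i <= j)%N) : XM h = XM h'.
Proof. by rewrite (bool_irrelevance h h'). Qed.

Lemma Xmor_isid_congr (i j i' j' : I) (h : (i <= j)%N) (h' : (i' <= j')%N) :
  i = i' -> j = j' -> is_id (XM h) -> is_id (XM h').
Proof. by move=> ei ej; subst i' j'; rewrite (Xmor_irr h h'). Qed.

Lemma Xmor_isid_refl (i i' : I) (h' : (i' <= i')%N) : i = i' -> is_id (XM h').
Proof. by move=> _; rewrite Xmor_id; exists erefl. Qed.

Lemma Xmor_congr (p p' q q' : I) (h : (p <= q)%N) (h' : (p' <= q')%N)
  (ep : Xob X p = Xob X p') (eq : Xob X q = Xob X q') :
  p = p' -> q = q' -> ccomp (XM h') (tr ep) = ccomp (tr eq) (XM h).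
Proof.
move=> e1 e2; subst p' q'.
rewrite (proof_irrelevance _ ep erefl) (proof_irrelevance _ eq erefl) /=.
by rewrite ccompf1 ccomp1f (Xmor_irr h h').
Qed.

Lemma Xmor_back (p p' q q' : I) (hpp : (p' <= p)%N) (h : (p <= q)%N) (h' : (p' <= q')%N)
  (ep : Xob X p = Xob X p') (eq : Xob X q = Xob X q') :
  q = q' -> XM hpp = tr (esym ep) -> ccomp (XM h') (tr ep) = ccomp (tr eq) (XM h).
Proof.
move=> e2 E; subst q'.
rewrite (proof_irrelevance _ eq erefl) /= ccomp1f.
rewrite -(Xmor_comp hpp h h') E -ccompA tr_comp_inv ccompf1 //.
Qed.

Lemma Xmor_fwd (p p' q q' : I) (hqq : (q' <= q)%N) (h : (p <= q)%N) (h' : (p' <= q')%N)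
  (ep : Xob X p = Xob X p') (eq : Xob X q = Xob X q') :
  p = p' -> XM hqq = tr (esym eq) -> ccomp (XM h') (tr ep) = ccomp (tr eq) (XM h).
Proof.
move=> e1 E; subst p'.
rewrite (proof_irrelevance _ ep erefl) /= ccompf1.
rewrite -(Xmor_comp h' hqq h) E ccompA.
rewrite tr_comp_inv2.
by rewrite ccomp1f.
Qed.

Lemma NHom_eq_id (f : NHom X X) :
  (forall i, alpha f i = i) -> (forall i, is_id (theta f i)) -> f = NHom_id X.
Proof.
case: f => al am th tp tn /= Ha Ht.
have ea : al = (fun i => i) by apply: functional_extensionality.
subst al.
have et : th = (fun i => cid (Xob X i)).
  apply: functional_extensionality_dep => i.
  by case: (Ht i) => e ->; rewrite (proof_irrelevance _ e erefl).
subst th.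
have eam : am = (fun i j h => h) by apply: proof_irrelevance.
subst am.
rewrite /NHom_id; f_equal; apply: proof_irrelevance.
Qed.

End NX.

Section Constr.
Variable C : Reedy.
Variable X : NObj C.
Local Notation I := ('I_(ndim X).+1).
Local Notation XM := (Xmor X).
Variables k k' : I.
Hypothesis kk' : nat_of_ord k' = (nat_of_ord k).+1.
Variable hkk : (k <= k')%N.
Hypothesis Hid : is_id (XM hkk).

Definition al1 (m : I) : I := if nat_of_ord m == nat_of_ord k then k' else m.

Lemma al1_mono (i j : I) : (i <= j)%N -> (al1 i <= al1 j)%N.
Proof. rewrite /al1; case: eqP; case: eqP => //= *; lia. Qed.

Lemma al1_infl (i : I) : (i <= al1 i)%N.
Proof. rewrite /al1; case: eqP => //= *; lia. Qed.

Lemma th1_plus (i : I) : Cplus (XM (al1_infl i)).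
Proof.
apply: Cplus_isid; move: (al1_infl i); rewrite /al1; case: eqP => [e|_] h.
- apply: (Xmor_isid_congr (h := hkk)) Hid => //; exact: val_inj.
- exact: (Xmor_isid_refl (i := i)).
Qed.

Lemma th1_nat (i j : I) (h : (i <= j)%N) :
  ccomp (XM (al1_mono h)) (XM (al1_infl i)) = ccomp (XM (al1_infl j)) (XM h).
Proof.
have H : (i <= al1 j)%N := leq_trans h (al1_infl j).
by rewrite (Xmor_comp _ _ H) (Xmor_comp _ _ H).
Qed.

Definition f1 : NHom X X := Build_NHom th1_plus th1_nat.

Lemma f1_ge : NHom_le (NHom_id X) f1.
Proof. exists al1_infl => i /=; by rewrite ccompf1. Qed.

Lemma f1_alpha : alpha f1 k = k'.
Proof. by rewrite /= /al1 eqxx. Qed.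

Definition al2 (m : I) : I := if nat_of_ord m == nat_of_ord k' then k else m.

Lemma al2_mono (i j : I) : (i <= j)%N -> (al2 i <= al2 j)%N.
Proof. rewrite /al2; case: eqP; case: eqP => //= *; lia. Qed.

Lemma al2_defl (i : I) : (al2 i <= i)%N.
Proof. rewrite /al2; case: eqP => //= *; lia. Qed.

Lemma E2 (m : I) : Xob X m = Xob X (al2 m).
Proof.
rewrite /al2; case: eqP => [e|_] //.
rewrite (val_inj e); case: Hid => e0 _; exact: esym e0.
Qed.

Lemma defl_isid (i : I) : is_id (XM (al2_defl i)).
Proof.
move: (al2_defl i); rewrite /al2; case: eqP => [e|_] h.
- apply: (Xmor_isid_congr (h := hkk)) Hid => //; exact: val_inj.
- exact: (Xmor_isid_refl (i := i)).
Qed.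

Lemma al2_fix (i : I) : nat_of_ord i <> nat_of_ord k' -> i = al2 i.
Proof. by rewrite /al2; case: eqP. Qed.

Lemma th2_plus (i : I) : Cplus (tr (E2 i)).
Proof. apply: Cplus_isid; exact: tr_isid. Qed.

Lemma th2_nat (i j : I) (h : (i <= j)%N) :
  ccomp (XM (al2_mono h)) (tr (E2 i)) = ccomp (tr (E2 j)) (XM h).
Proof.
case: (eqVneq i j) => [eij|nij].
  subst j; by rewrite !Xmor_id ccomp1f ccompf1.
case: (nat_of_ord i =P nat_of_ord k') => ei; case: (nat_of_ord j =P nat_of_ord k') => ej.
- by case/eqP: nij; apply: ord_inj; rewrite ei ej.
- apply: (Xmor_back (hpp := al2_defl i)); first exact: al2_fix.
  exact: isid_tr (defl_isid i) _.
- apply: (Xmor_fwd (hqq := al2_defl j)); first exact: al2_fix.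
  exact: isid_tr (defl_isid j) _.
- apply: Xmor_congr; exact: al2_fix.
Qed.

Definition f2 : NHom X X := Build_NHom th2_plus th2_nat.

Lemma f2_le : NHom_le f2 (NHom_id X).
Proof.
exists al2_defl => i /=.
by rewrite (isid_tr (defl_isid i) (esym (E2 i))) tr_comp_inv.
Qed.

Lemma f2_alpha : alpha f2 k' = k.
Proof. by rewrite /= /al2 eqxx. Qed.

End Constr.

Section Main.
Variable C : Reedy.
Variable X : NObj C.
Local Notation I := ('I_(ndim X).+1).
Local Notation XM := (Xmor X).
Local Notation id := (NHom_id X).

Lemma imp12 : reflects_ids X -> forall f : NHom X X, NHom_le id f -> f = id.
Proof.
move=> R f [H Ht]; simpl in Ht.
have Hi : forall i, is_id (XM (H i)).
  move=> i; apply: pm_isid; last exact: Xmor_minus.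
  by rewrite -(ccompf1 (XM (H i))) -Ht; apply: theta_plus.
apply: NHom_eq_id => i.
- by apply: esym; apply: R (Hi i).
- by rewrite Ht ccompf1; exact: Hi.
Qed.

Lemma zero_lem (z q : I) (t : Hom (Xob X ord0) (Xob X z)) (hz : (z <= ord0)%N)
  (hzq : (z <= q)%N) (h0q : (@ord0 (ndim X) <= q)%N) :
  cid _ = ccomp (XM hz) t -> ccomp (XM hzq) t = XM h0q.
Proof.
have ez : z = ord0 by apply: ord_inj => /=; move: hz; rewrite leqn0 => /eqP.
subst z; rewrite Xmor_id ccomp1f => <-; rewrite ccompf1; exact: Xmor_irr.
Qed.

Lemma imp13 : reflects_ids X -> forall f : NHom X X, NHom_le f id -> f = id.
Proof.
move=> R f [H Ht]; simpl in Ht.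
have key : forall j, is_id (XM (H j)) /\ is_id (theta f j).
  move=> j.
  have h0 : (@ord0 (ndim X) <= j)%N by [].
  have h0a : (@ord0 (ndim X) <= alpha f j)%N by [].
  have N := theta_nat f h0.
  rewrite (@zero_lem _ _ _ _ (alpha_mono f h0) h0a (Ht ord0)) in N.
  have E := reedy_fact_uniq (Xmor_minus h0a) (Cplus_id _) (esym (ccomp1f _))
     (Xmor_minus h0) (theta_plus f j) N.
  pose F := fun s : {c0 : C & (Hom (Xob X ord0) c0 * Hom c0 (Xob X (alpha f j)))%type} =>
     existT (fun c0 => Hom c0 (Xob X (alpha f j))) (projT1 s) (projT2 s).2.
  have E2 := f_equal F E; rewrite /F /= in E2.
  exact: split_isid E2 (esym (Ht j)).
apply: NHom_eq_id => i; last by case: (key i).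
by apply: R (proj1 (key i)).
Qed.

Lemma adjacent (i j : I) (h : (i <= j)%N) : is_id (XM h) -> i != j ->
  exists (k k' : I) (kk' : nat_of_ord k' = (nat_of_ord k).+1) (hkk : (k <= k')%N),
    is_id (XM hkk).
Proof.
move=> Hid nij.
have hij : (i < j)%N by rewrite ltn_neqAle h andbT; exact: nij.
have lt : ((nat_of_ord i).+1 < (ndim X).+1)%N by have := ltn_ord j; lia.
pose k' : I := Ordinal lt.
have hkk : (i <= k')%N by rewrite /= leqnSn.
have hk'j : (k' <= j)%N by [].
exists i, k', erefl, hkk.
apply: (mm_isid (h := XM hk'j)); try exact: Xmor_minus.
by rewrite (Xmor_comp _ _ h).
Qed.

Lemma imp21 : (forall f : NHom X X, NHom_le id f -> f = id) -> reflects_ids X.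
Proof.
move=> H2 i j h Hid; case: (eqVneq i j) => // nij; exfalso.
case: (adjacent Hid nij) => k [k' [kk' [hkk Hk]]].
have := f_equal (fun f : NHom X X => alpha f k) (H2 _ (@f1_ge _ _ k k' kk' hkk Hk)).
by rewrite f1_alpha /= => /(f_equal (@nat_of_ord _)); rewrite kk'; lia.
Qed.

Lemma imp31 : (forall f : NHom X X, NHom_le f id -> f = id) -> reflects_ids X.
Proof.
move=> H3 i j h Hid; case: (eqVneq i j) => // nij; exfalso.
case: (adjacent Hid nij) => k [k' [kk' [hkk Hk]]].
have := f_equal (fun f : NHom X X => alpha f k') (H3 _ (@f2_le _ _ k k' kk' hkk Hk)).
by rewrite f2_alpha /= => /(f_equal (@nat_of_ord _)); rewrite kk'; lia.
Qed.

Lemma imp41 : (forall f : NHom X X, NHom_equiv id f -> NHom_le f id) -> reflects_ids X.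
Proof.
move=> H4 i j h Hid; case: (eqVneq i j) => // nij; exfalso.
case: (adjacent Hid nij) => k [k' [kk' [hkk Hk]]].
case: (H4 _ (rst_step _ _ _ _ (@f1_ge _ _ k k' kk' hkk Hk))) => H _.
by have := H k; rewrite f1_alpha /= kk'; lia.
Qed.

Lemma imp15 : reflects_ids X -> forall f : NHom X X, NHom_equiv id f -> f = id.
Proof.
move=> R.
have G : forall f g, NHom_equiv f g -> (f = id <-> g = id).
  move=> f g; elim => {f g}.
  - move=> x y le; split => E; subst.
    + exact: imp12 R _ le.
    + exact: imp13 R _ le.
  - by [].
  - by move=> x y _ [? ?]; split.
  - by move=> x y z _ [? ?] _ [? ?]; split; auto.
by move=> f /G [H _]; apply: H.
Qed.

Lemma le_id_id : NHom_le id id.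
Proof. exists (fun i => leqnn i) => i /=; by rewrite Xmor_id ccomp1f. Qed.

End Main.

Theorem lemma5p6 (C : Reedy) (X : NObj C) :
  [<-> reflects_ids X;
       (* id maximal *)
       (forall f : NHom X X, NHom_le (NHom_id X) f -> f = NHom_id X);
       (* id minimal *)
       (forall f : NHom X X, NHom_le f (NHom_id X) -> f = NHom_id X);
       (* id largest in its equivalence class *)
       (forall f : NHom X X, NHom_equiv (NHom_id X) f -> NHom_le f (NHom_id X));
       (* equivalence class of id is a singleton *)
       (forall f : NHom X X, NHom_equiv (NHom_id X) f -> f = NHom_id X)].
Proof.
tfae.
- exact: imp12.
- by move=> /imp21 /imp13.
- by move=> /imp31 /imp15 H f /H ->; apply: le_id_id.
- by move=> /imp41 /imp15.
- move=> H5; apply: imp21 => f le; apply: H5; exact: rst_step.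
Qed.
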